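(* In $D_n$: (1) $w_L\cdot s_1=s_{1'}\cdot w_L$ for $2\le L\le n-1$; (2) $w_L\cdot s_{1'}=s_1\cdot w_L$ for $2\le L\le n-1$; (3) $w_L\cdot s_k=s_k\cdot w_L$ whenever $2\le k\le L-1$ and $L\le n-1$.
   Context: $D_n$ ($n\ge2$) is the Coxeter group with generators $s_{1'},s_1,\dots,s_{n-1}$ and relations $s^2=1$, $(s_i s_{i+1})^3=1$, $(s_is_j)^2=1$ for $|i-j|\ge 2$, $(s_{1'}s_2)^3=1$, $(s_{1'}s_i)^2=1$ for $i\ne 2$. $w_L=s_L s_{L-1}\cdots s_2 s_1 s_{1'} s_2\cdots s_L$ for $1\le L\le n-1$. *)

(* Defs.v *)
From mathcomp Require Import all_boot.
Set Implicit Arguments. Unset Strict Implicit. Unset Printing Implicit Defensive.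

(* Generators of D_n are encoded by natural numbers:
     0        encodes s_{1'}
     i (1 <= i <= n-1) encodes s_i.
   A generator code a is valid in D_n iff a < n. *)

Definition coxD (a b : nat) : nat :=
  if a == b then 1
  else if (a == 0) || (b == 0) then
         (if (a + b == 2) then 3 else 2)          (* s_{1'} with s_i: 3 iff i = 2 *)
       else if (a == b.+1) || (b == a.+1) then 3 else 2.

Fixpoint wpow (w : seq nat) (k : nat) : seq nat :=
  if k is k'.+1 then w ++ wpow w k' else [::].

(* The group D_n is the quotient of the free monoid on the generators
   by this congruence (since s^2 = 1 for every generator, the monoid
   presentation defines the same group as the group presentation). *)
Inductive Deq (n : nat) : seq nat -> seq nat -> Prop :=
| Deq_refl u : Deq n u u
| Deq_sym u v : Deq n u v -> Deq n v u
| Deq_trans u v w : Deq n u v -> Deq n v w -> Deq n u w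
| Deq_ctx x y u v : Deq n u v -> Deq n (x ++ u ++ y) (x ++ v ++ y)
| Deq_rel a b : a < n -> b < n -> Deq n (wpow [:: a; b] (coxD a b)) [::].

(* w_L = s_L s_{L-1} ... s_2 s_1 s_{1'} s_2 ... s_L *)
Definition wL (L : nat) : seq nat :=
  rev (iota 1 L) ++ [:: 0] ++ iota 2 L.-1.

(* Main.v *)
Require Import Defs.
From mathcomp Require Import all_boot zify.
Set Implicit Arguments. Unset Strict Implicit.

Lemma coxD_far x m : x.+2 <= m -> 3 <= m -> coxD x m = 2.
Proof.
move=> h1 h2; rewrite /coxD.
case: eqP => ?; first lia.
case: ifP => [/orP[]/eqP ?|/norP[/eqP ? /eqP ?]].
- subst; case: eqP => ?; lia.
- lia.
case: ifP => // /orP[]/eqP ?; lia.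
Qed.

Lemma coxD_sym a b : coxD a b = coxD b a.
Proof.
by rewrite /coxD eq_sym addnC [(b==0)||_]orbC [(b == a.+1) || _]orbC.
Qed.

Lemma coxD_adj m : 1 <= m -> coxD m m.+1 = 3.
Proof.
move=> h; rewrite /coxD.
case: eqP => ?; first lia.
case: ifP => [/orP[]/eqP ?|_]; first lia; first by subst.
by rewrite eqxx orbT.
Qed.

Section S.
Variable n : nat.

Lemma Deq_eq l r : l = r -> Deq n l r.
Proof. by move=> ->; apply: Deq_refl. Qed.

Lemma step x u v y l r : l = x ++ u ++ y -> Deq n u v ->
  Deq n (x ++ v ++ y) r -> Deq n l r.
Proof. by move=> -> H1 H2; apply: Deq_trans (Deq_ctx x y H1) H2. Qed.

Lemma sq a : a < n -> Deq n [:: a; a] [::].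
Proof. by move=> h; have := Deq_rel h h; rewrite /coxD eqxx. Qed.

Lemma comm a b : a < n -> b < n -> coxD a b = 2 -> Deq n [:: a; b] [:: b; a].
Proof.
move=> ha hb e.
apply: Deq_sym.
apply: (step (x:=[::]) (u:=[::]) (v:=wpow [:: a; b] (coxD a b)) (y:=[:: b; a])) => //.
  by apply: Deq_sym; apply: Deq_rel.
rewrite e.
apply: (step (x:=[:: a; b; a]) (u:=[:: b; b]) (v:=[::]) (y:=[:: a])) => //.
  exact: sq.
apply: (step (x:=[:: a; b]) (u:=[:: a; a]) (v:=[::]) (y:=[::])) => //.
  exact: sq.
exact: Deq_refl.
Qed.

Lemma braid a b : a < n -> b < n -> coxD a b = 3 -> Deq n [:: a; b; a] [:: b; a; b].
Proof.
move=> ha hb e.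
apply: Deq_sym.
apply: (step (x:=[::]) (u:=[::]) (v:=wpow [:: a; b] (coxD a b)) (y:=[:: b; a; b])) => //.
  by apply: Deq_sym; apply: Deq_rel.
rewrite e.
apply: (step (x:=[:: a; b; a; b; a]) (u:=[:: b; b]) (v:=[::]) (y:=[:: a; b])) => //.
  exact: sq.
apply: (step (x:=[:: a; b; a; b]) (u:=[:: a; a]) (v:=[::]) (y:=[:: b])) => //.
  exact: sq.
apply: (step (x:=[:: a; b; a]) (u:=[:: b; b]) (v:=[::]) (y:=[::])) => //.
  exact: sq.
exact: Deq_refl.
Qed.

Lemma comm_word m u : m < n -> (forall x, x \in u -> x < n /\ coxD x m = 2) ->
  Deq n (u ++ [:: m]) ([:: m] ++ u).
Proof.
move=> hm; elim: u => [|x u IH] H /=; first exact: Deq_refl.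
have [hx e] := H x (mem_head _ _).
apply: (step (x:=[:: x]) (u:=u ++ [:: m]) (v:=[:: m] ++ u) (y:=[::])).
- by rewrite cats0.
- by apply: IH => y hy; apply: H; rewrite inE hy orbT.
apply: (step (x:=[::]) (u:=[:: x; m]) (v:=[:: m; x]) (y:=u)).
- by rewrite cats0.
- exact: comm.
exact: Deq_refl.
Qed.

End S.

Lemma wL_S m : 1 <= m -> wL m.+1 = [:: m.+1] ++ wL m ++ [:: m.+1].
Proof.
case: m => // p _; rewrite /wL !succnK.
have h1 := iotaD 1 p.+1 1; rewrite addn1 in h1; rewrite h1.
have h2 := iotaD 2 p 1; rewrite addn1 in h2; rewrite h2.
rewrite rev_cat /= -!catA /=.
by rewrite add1n add2n.
Qed.

Lemma wL_mem m (x : nat) : x \in wL m -> x <= m.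
Proof.
rewrite /wL !mem_cat mem_rev !mem_iota inE => /orP[/andP[h1 h2]|/orP[/eqP->//|/andP[h1 h2]]]; move: h1 h2; case: m => [|m] /=; lia.
Qed.

Lemma wL_far n j m : m < n -> j.+2 <= m -> 3 <= m ->
  forall x, x \in wL j -> x < n /\ coxD x m = 2.
Proof.
move=> hm hj h3 x /wL_mem hx; split; first lia.
apply: coxD_far => //; lia.
Qed.

Ltac eqs := by rewrite -!catA /= ?cats0.

Theorem mainTheorem12 (n : nat) (hn : 2 <= n) :
  (forall L, 2 <= L <= n.-1 -> Deq n (wL L ++ [:: 1]) ([:: 0] ++ wL L)) /\
  (forall L, 2 <= L <= n.-1 -> Deq n (wL L ++ [:: 0]) ([:: 1] ++ wL L)) /\
  (forall L k, 2 <= k <= L.-1 -> L <= n.-1 ->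
     Deq n (wL L ++ [:: k]) ([:: k] ++ wL L)).
Proof.
split; [|split].
- elim => // L IH /andP[hL hLn].
  case: (ltnP L 2) => hL2.
  + have -> : L = 1 by lia.
    have h0 : 0 < n by lia.
    have h1 : 1 < n by lia.
    have h2 : 2 < n by lia.
    rewrite /wL /=.
    apply: (step (x:=[:: 2]) (u:=[:: 1; 0]) (v:=[:: 0; 1]) (y:=[:: 2; 1])) => //.
      exact: comm.
    apply: (step (x:=[:: 2; 0]) (u:=[:: 1; 2; 1]) (v:=[:: 2; 1; 2]) (y:=[::])) => //.
      exact: braid.
    apply: (step (x:=[::]) (u:=[:: 2; 0; 2]) (v:=[:: 0; 2; 0]) (y:=[:: 1; 2])) => //.
      exact: braid.
    apply: (step (x:=[:: 0; 2]) (u:=[:: 0; 1]) (v:=[:: 1; 0]) (y:=[:: 2])) => //.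
      exact: comm.
    exact: Deq_refl.
  + rewrite wL_S; last lia.
    set W := wL L.
    have hL1 : L.+1 < n by lia.
    have h0 : 0 < n by lia.
    have h1 : 1 < n by lia.
    apply: (step (x:=[:: L.+1] ++ W) (u:=[:: L.+1; 1]) (v:=[:: 1; L.+1]) (y:=[::])); first eqs.
      by apply: comm => //; rewrite coxD_sym; apply: coxD_far; lia.
    apply: (step (x:=[:: L.+1]) (u:=W ++ [:: 1]) (v:=[:: 0] ++ W) (y:=[:: L.+1])); first eqs.
      by apply: IH; lia.
    apply: (step (x:=[::]) (u:=[:: L.+1; 0]) (v:=[:: 0; L.+1]) (y:=W ++ [:: L.+1])); first eqs.
      by apply: comm => //; rewrite coxD_sym; apply: coxD_far; lia.
    apply: Deq_eq; eqs.
- elim => // L IH /andP[hL hLn].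
  case: (ltnP L 2) => hL2.
  + have -> : L = 1 by lia.
    have h0 : 0 < n by lia.
    have h1 : 1 < n by lia.
    have h2 : 2 < n by lia.
    rewrite /wL /=.
    apply: (step (x:=[:: 2; 1]) (u:=[:: 0; 2; 0]) (v:=[:: 2; 0; 2]) (y:=[::])) => //.
      exact: braid.
    apply: (step (x:=[::]) (u:=[:: 2; 1; 2]) (v:=[:: 1; 2; 1]) (y:=[:: 0; 2])) => //.
      exact: braid.
    exact: Deq_refl.
  + rewrite wL_S; last lia.
    set W := wL L.
    have hL1 : L.+1 < n by lia.
    have h0 : 0 < n by lia.
    have h1 : 1 < n by lia.
    apply: (step (x:=[:: L.+1] ++ W) (u:=[:: L.+1; 0]) (v:=[:: 0; L.+1]) (y:=[::])); first eqs.
      by apply: comm => //; rewrite coxD_sym; apply: coxD_far; lia.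
    apply: (step (x:=[:: L.+1]) (u:=W ++ [:: 0]) (v:=[:: 1] ++ W) (y:=[:: L.+1])); first eqs.
      by apply: IH; lia.
    apply: (step (x:=[::]) (u:=[:: L.+1; 1]) (v:=[:: 1; L.+1]) (y:=W ++ [:: L.+1])); first eqs.
      by apply: comm => //; rewrite coxD_sym; apply: coxD_far; lia.
    apply: Deq_eq; eqs.
- elim => [|L IH] k //=; first lia.
  move=> /andP[hk1 hk2] hLn.
  have hL1 : L.+1 < n by lia.
  have hk : k < n by lia.
  case: (ltnP k L) => hkL.
  + rewrite wL_S; last lia.
    set W := wL L.
    apply: (step (x:=[:: L.+1] ++ W) (u:=[:: L.+1; k]) (v:=[:: k; L.+1]) (y:=[::])); first eqs.
      by apply: comm => //; rewrite coxD_sym; apply: coxD_far; lia.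
    apply: (step (x:=[:: L.+1]) (u:=W ++ [:: k]) (v:=[:: k] ++ W) (y:=[:: L.+1])); first eqs.
      by apply: IH; lia.
    apply: (step (x:=[::]) (u:=[:: L.+1; k]) (v:=[:: k; L.+1]) (y:=W ++ [:: L.+1])); first eqs.
      by apply: comm => //; rewrite coxD_sym; apply: coxD_far; lia.
    apply: Deq_eq; eqs.
  + have hkL' : k = L by lia.
    subst k.
    have [j hj] : exists j, L = j.+1 by exists L.-1; lia.
    subst L.
    rewrite wL_S; last lia.
    rewrite (@wL_S j); last lia.
    set V := wL j.
    have hj1 : j.+1 < n by lia.
    apply: (step (x:=[:: j.+2; j.+1] ++ V) (u:=[:: j.+1; j.+2; j.+1]) (v:=[:: j.+2; j.+1; j.+2]) (y:=[::])); first eqs.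
      by apply: braid => //; apply: coxD_adj; lia.
    apply: (step (x:=[:: j.+2; j.+1]) (u:=V ++ [:: j.+2]) (v:=[:: j.+2] ++ V) (y:=[:: j.+1; j.+2])); first eqs.
      by apply: comm_word => //; apply: wL_far; lia.
    apply: (step (x:=[::]) (u:=[:: j.+2; j.+1; j.+2]) (v:=[:: j.+1; j.+2; j.+1]) (y:=V ++ [:: j.+1; j.+2])); first eqs.
      by apply: braid => //; rewrite coxD_sym; apply: coxD_adj; lia.
    apply: Deq_eq; eqs.
Qed.
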